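(* Let $s_{1}, s_{2}, p_{1}, p_{2}, m, k \in \mathbb N$ with $m \geq s_{1}+s_{2}-1$. Then \begin{align*} \sum_{n=1}^\infty\frac{H_n^{(p_{1},s_{1})}H_n^{(p_{2},s_{2})}}{n^{m}\binom{n+k}{k}} &=\sum_{\ell_{1}=0}^{s_{1}-1}\sum_{t_{1}=0}^{s_{1}-1-\ell_{1}} \sum_{\ell_{2}=0}^{s_{2}-1}\sum_{t_{2}=0}^{s_{2}-1-\ell_{2}}a(s_{1},\ell_{1},t_{1})a(s_{2},\ell_{2},t_{2})\\ &\quad \times \sum_{r=1}^{k}(-1)^{r+1} r \binom{k}{r}\, T(p_{1}-\ell_{1},p_{2}-\ell_{2},m-t_{1}-t_{2},1,r,0)\,, \end{align*} where $T(q_1,q_2,u,1,r,0)=\sum_{n=1}^\infty\frac{H_n^{(q_{1})}H_n^{(q_{2})}}{n^{u}(n+r)}$. Consequently this sum can be expressed in terms of classical Euler sums, zeta values and generalized harmonic numbers.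
   Context: $\mathbb N=\{1,2,\dots\}$. For $n\in\mathbb N_0$ and $q\in\mathbb N$, $H_n^{(q)}=\sum_{j=1}^n j^{-q}$; for an integer $q\ge 0$, $H_n^{(-q)}$ denotes $\sum_{\ell=1}^n \ell^{q}$ (so $H_n^{(0)}=n$). Generalized hyperharmonic numbers: $H_n^{(p,1)}=H_n^{(p)}$, $H_n^{(p,r)}=\sum_{j=1}^n H_j^{(p,r-1)}$ for $r\ge2$. For $q_1,q_2\in\mathbb Z$, $u,r\in\mathbb N$, $T(q_{1},q_{2},u,1,r,0):=\sum_{n=1}^\infty\frac{H_n^{(q_{1})}H_n^{(q_{2})}}{n^{u}(n+r)}$. Bernoulli numbers $B_j^{+}$: $\frac{x}{1-e^{-x}}=\sum_{j\ge0}B_j^{+}\frac{x^j}{j!}$. The rational coefficients $a(r,m,j)$ ($r\in\mathbb N$, $0\le m\le r-1$, $0\le j\le r-1-m$) are defined by $a(1,0,0)=1$ and, for $r\ge1$: $a(r+1,r,0)=-\sum_{m=0}^{r-1} \frac{a(r,m,r-m-1)}{r-m}$; $a(r+1,m,\ell)=\sum_{j=\ell-1}^{r-1-m} \frac{a(r,m,j)}{j+1} \binom{j+1}{j-\ell+1}B_{j-\ell+1}^{+}$ for $0\leq m \leq r-1$, $1\leq \ell \leq r-m$; $a(r+1,m,0)=-\sum_{y=0}^{m} \sum_{j=\max\{0, m-y-1\}}^{r-1-y}a(r,y,j)D(r,m,j,y)$ for $0\leq m \leq r-1$, where $D(r,m,j,y)=\sum_{\ell=\max\{0, m-y-1\}}^{j}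 \frac{1}{j+1} \binom{j+1}{j-\ell}B_{j-\ell}^{+}\binom{\ell+1}{m-y}(-1)^{1+\ell-m+y}$. (These satisfy the known identity $H_n^{(p,r)}=\sum_{m=0}^{r-1}\sum_{j=0}^{r-1-m}a(r,m,j)n^jH_n^{(p-m)}$ for all $n,p\in\mathbb N$.) *)

(* Defs.v *)
From Stdlib Require Import Reals Arith ZArith List Lia Lra.
From Coquelicot Require Import Coquelicot.
Open Scope R_scope.

(* fsum a b f = f a + f (a+1) + ... + f b  (0 if b < a) *)
Definition fsum (a b : nat) (f : nat -> R) : R :=
  fold_right (fun i acc => f i + acc) 0 (List.seq a (S b - a)%nat).

Fixpoint binom (n k : nat) : nat :=
  match n, k with
  | _, O => 1%nat
  | O, S _ => 0%nat
  | S n', S k' => (binom n' k' + binom n' (S k'))%nat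
  end.

(* Bernoulli numbers B_j^+ : x/(1-e^{-x}) = sum_j B_j^+ x^j/j!.
   Comparing coefficients of x^{n+1}/(n+1)! in x = (1-e^{-x}) * sum_j B_j^+ x^j/j!
   gives  sum_{i=1}^{n+1} (-1)^{i+1} C(n+1,i) B^+_{n+1-i} = [n = 0],
   i.e.  B^+_n = ([n=0] - sum_{i=2}^{n+1} (-1)^{i+1} C(n+1,i) B^+_{n+1-i}) / (n+1).
   bern_tab n j = B^+_j for j <= n. *)
Fixpoint bern_tab (n : nat) : nat -> R :=
  match n with
  | O => fun j => if (j =? 0)%nat then 1 else 0
  | S n' => fun j =>
      if (j <=? n')%nat then bern_tab n' j
      else if (j =? S n')%nat then
        (- fsum 2 (S (S n'))
             (fun i => (-1) ^ (S i) * INR (binom (S (S n')) i)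
                       * bern_tab n' (S (S n') - i)%nat))
        / INR (S (S n'))
      else 0
  end.

Definition Bplus (j : nat) : R := bern_tab j j.

Definition Hq (n : nat) (q : Z) : R :=
  fsum 1 n (fun j => powerRZ (INR j) (- q)).

(* generalized hyperharmonic numbers H_n^{(p,r)}, r >= 1 (value 0 for r = 0, unused) *)
Fixpoint hyperH (p : Z) (r : nat) (n : nat) : R :=
  match r with
  | O => 0
  | S r' =>
      match r' with
      | O => Hq n p
      | S _ => fsum 1 n (fun j => hyperH p r' j)
      end
  end.

(* one recursion step: given A = a(r,.,.) (r >= 1), compute a(r+1,.,.) *)
Definition D_coef (r m j y : nat) : R :=
  fsum (m - y - 1)%nat j (fun l =>
    / INR (S j) * INR (binom (S j) (j - l)%nat) * Bplus (j - l)%nat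
    * INR (binom (S l) (m - y)%nat) * (-1) ^ (S l + y - m)%nat).

Definition a_step (r : nat) (A : nat -> nat -> R) (m l : nat) : R :=
  if andb (m =? r)%nat (l =? 0)%nat then
    - fsum 0 (r - 1)%nat (fun m' => A m' (r - m' - 1)%nat / INR (r - m')%nat)
  else if (m <=? (r - 1)%nat)%nat then
    if (l =? 0)%nat then
      - fsum 0 m (fun y =>
          fsum (m - y - 1)%nat (r - 1 - y)%nat (fun j => A y j * D_coef r m j y))
    else if (l <=? (r - m)%nat)%nat then
      fsum (l - 1)%nat (r - 1 - m)%nat (fun j =>
        A m j / INR (S j) * INR (binom (S j) (S j - l)%nat) * Bplus (S j - l)%nat)
    else 0
  else 0.

(* a_coef r m j = a(r,m,j) for r >= 1, 0 <= m <= r-1, 0 <= j <= r-1-m; 0 otherwise *)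
Fixpoint a_coef (r : nat) : nat -> nat -> R :=
  match r with
  | O => fun _ _ => 0
  | S r' =>
      match r' with
      | O => fun m j => if andb (m =? 0)%nat (j =? 0)%nat then 1 else 0
      | S _ => a_step r' (a_coef r')
      end
  end.

Definition T_term (q1 q2 : Z) (u r : nat) (n : nat) : R :=
  Hq n q1 * Hq n q2 / (INR n ^ u * INR (n + r)).

Definition T (q1 q2 : Z) (u r : nat) : R :=
  Series (fun n => T_term q1 q2 u r (S n)).

(* Main.v *)
Require Import Defs.
From Stdlib Require Import Reals Arith ZArith List Lia Lra.
From Coquelicot Require Import Coquelicot.
Open Scope R_scope.

Definition G (a n : nat) (f : nat -> R) : R :=
  fold_right (fun i acc => f i + acc) 0 (List.seq a n).

Lemma fsum_G a b f : fsum a b f = G a (S b - a) f.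
Proof. reflexivity. Qed.

Lemma G_Sr a n f : G a (S n) f = G a n f + f (a + n)%nat.
Proof.
  revert a; induction n; intros a.
  - unfold G; simpl. rewrite Nat.add_0_r; ring.
  - change (G a (S (S n)) f) with (f a + G (S a) (S n) f).
    rewrite IHn. change (G a (S n) f) with (f a + G (S a) n f).
    replace (S a + n)%nat with (a + S n)%nat by lia. ring.
Qed.

Lemma G_add a n1 n2 f : G a (n1 + n2) f = G a n1 f + G (a + n1) n2 f.
Proof.
  induction n2.
  - rewrite Nat.add_0_r. unfold G at 3. simpl. ring.
  - rewrite Nat.add_succ_r, !G_Sr, IHn2. rewrite Nat.add_assoc. ring.
Qed.

Lemma G_ext a n f g : (forall i, (a <= i < a + n)%nat -> f i = g i) -> G a n f = G a n g.
Proof.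
  induction n; intros H.
  - reflexivity.
  - rewrite !G_Sr. rewrite IHn by (intros; apply H; lia). rewrite H by lia. reflexivity.
Qed.

Lemma G_plus a n f g : G a n (fun i => f i + g i) = G a n f + G a n g.
Proof. induction n. unfold G; simpl; ring. rewrite !G_Sr, IHn. ring. Qed.

Lemma G_scal a n c f : G a n (fun i => c * f i) = c * G a n f.
Proof. induction n. unfold G; simpl; ring. rewrite !G_Sr, IHn. ring. Qed.

Lemma G_zero a n f : (forall i, (a <= i < a + n)%nat -> f i = 0) -> G a n f = 0.
Proof.
  intros H. transitivity (G a n (fun _ => 0 * 0)). apply G_ext. intros; rewrite H; auto; ring.
  rewrite G_scal. ring.
Qed.

Lemma fsum_nil a b f : (b < a)%nat -> fsum a b f = 0.
Proof. intros H. rewrite fsum_G. replace (S b - a)%nat with 0%nat by lia. reflexivity. Qed.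

Lemma fsum_first a b f : (a <= b)%nat -> fsum a b f = f a + fsum (S a) b f.
Proof. intros H. rewrite !fsum_G. replace (S b - a)%nat with (S (S b - S a)) by lia. reflexivity. Qed.

Lemma fsum_last a b f : (a <= S b)%nat -> fsum a (S b) f = fsum a b f + f (S b).
Proof. intros H. rewrite !fsum_G. replace (S (S b) - a)%nat with (S (S b - a)) by lia.
  rewrite G_Sr. f_equal. f_equal. lia. Qed.

Lemma fsum_one a f : fsum a a f = f a.
Proof. rewrite fsum_first by lia. rewrite fsum_nil by lia. ring. Qed.

Lemma fsum_ext a b f g : (forall i, (a <= i <= b)%nat -> f i = g i) -> fsum a b f = fsum a b g.
Proof. intros H. rewrite !fsum_G. apply G_ext. intros; apply H; lia. Qed.

Lemma fsum_plus a b f g : fsum a b (fun i => f i + g i) = fsum a b f + fsum a b g.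
Proof. rewrite !fsum_G. apply G_plus. Qed.

Lemma fsum_scal_l a b c f : fsum a b (fun i => c * f i) = c * fsum a b f.
Proof. rewrite !fsum_G. apply G_scal. Qed.

Lemma fsum_scal_r a b c f : fsum a b (fun i => f i * c) = fsum a b f * c.
Proof. rewrite Rmult_comm, <- fsum_scal_l. apply fsum_ext; intros; ring. Qed.

Lemma fsum_opp a b f : fsum a b (fun i => - f i) = - fsum a b f.
Proof. transitivity (fsum a b (fun i => -1 * f i)). apply fsum_ext; intros; ring.
  rewrite fsum_scal_l; ring. Qed.

Lemma fsum_minus a b f g : fsum a b (fun i => f i - g i) = fsum a b f - fsum a b g.
Proof. unfold Rminus. rewrite fsum_plus, fsum_opp. ring. Qed.

Lemma fsum_zero a b f : (forall i, (a <= i <= b)%nat -> f i = 0) -> fsum a b f = 0.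
Proof. intros H. rewrite fsum_G. apply G_zero. intros; apply H; lia. Qed.

Lemma G_swap a n c m (F : nat -> nat -> R) :
  G a n (fun i => G c m (F i)) = G c m (fun j => G a n (fun i => F i j)).
Proof.
  induction n.
  - unfold G at 1. simpl. symmetry. apply G_zero. intros. reflexivity.
  - rewrite G_Sr, IHn. rewrite <- G_plus. apply G_ext. intros. rewrite G_Sr. reflexivity.
Qed.

Lemma fsum_swap a b c d (F : nat -> nat -> R) :
  fsum a b (fun i => fsum c d (F i)) = fsum c d (fun j => fsum a b (fun i => F i j)).
Proof. unfold fsum. fold (G a (S b - a) (fun i => G c (S d - c) (F i))). apply G_swap. Qed.

Lemma fsum_shift a b c f : fsum a b (fun i => f (i + c)%nat) = fsum (a + c) (b + c) f.
Proof.
  rewrite !fsum_G. replace (S (b + c) - (a + c))%nat with (S b - a)%nat by lia.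
  generalize (S b - a)%nat as n. induction n. reflexivity.
  rewrite !G_Sr, IHn. f_equal. f_equal. lia.
Qed.

Lemma fsum_extend a b a' b' f :
  (a' <= a)%nat -> (b <= b')%nat -> (a <= S b)%nat ->
  (forall i, (a' <= i <= b')%nat -> (i < a \/ b < i)%nat -> f i = 0) ->
  fsum a' b' f = fsum a b f.
Proof.
  intros H1 H2 H3 H. rewrite !fsum_G.
  replace (S b' - a')%nat with ((a - a') + ((S b - a) + (S b' - S b)))%nat by lia.
  rewrite !G_add. rewrite (G_zero a'), (G_zero (a' + (a - a') + (S b - a))).
  replace (a' + (a - a'))%nat with a by lia. ring.
  - intros i Hi. apply H; lia.
  - intros i Hi. apply H; lia.
Qed.

Lemma fsum_single a b i0 f : (a <= i0 <= b)%nat ->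
  (forall i, (a <= i <= b)%nat -> i <> i0 -> f i = 0) -> fsum a b f = f i0.
Proof.
  intros H1 H. rewrite (fsum_extend i0 i0). apply fsum_one. lia. lia. lia.
  intros. apply H; lia.
Qed.

Lemma fsum_split a m b f : (a <= S m)%nat -> (m <= b)%nat ->
  fsum a b f = fsum a m f + fsum (S m) b f.
Proof.
  intros H1 H2. rewrite !fsum_G. replace (S b - a)%nat with ((S m - a) + (S b - S m))%nat by lia.
  rewrite G_add. f_equal. f_equal. lia.
Qed.

Lemma fsum_le a b f g : (forall i, (a <= i <= b)%nat -> f i <= g i) -> fsum a b f <= fsum a b g.
Proof.
  intros H. rewrite !fsum_G. assert (forall i, (a <= i < a + (S b - a))%nat -> f i <= g i) by (intros; apply H; lia).
  revert H0. generalize (S b - a)%nat as n. induction n; intros H0.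
  unfold G; simpl; lra. rewrite !G_Sr. apply Rplus_le_compat. apply IHn. intros; apply H0; lia. apply H0; lia.
Qed.

Lemma fsum_rev a b f : fsum a b f = fsum a b (fun i => f (a + b - i)%nat).
Proof.
  revert a. induction b; intros a.
  - destruct a. rewrite !fsum_one. reflexivity. rewrite !fsum_nil by lia. reflexivity.
  - destruct (Nat.le_gt_cases a (S b)) as [Hab|Hab].
    + destruct (Nat.eq_dec a (S b)) as [->|Hne]. rewrite !fsum_one. f_equal. lia.
      rewrite fsum_last by lia. rewrite (fsum_first a (S b)) by lia.
      rewrite IHb. replace (a + S b - a)%nat with (S b) by lia. rewrite Rplus_comm. f_equal.
      replace (S a) with (a + 1)%nat by lia. replace (S b) with (b + 1)%nat by lia.
      rewrite <- fsum_shift. apply fsum_ext. intros. f_equal. lia.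
    + rewrite !fsum_nil by lia. reflexivity.
Qed.

Lemma fsum_reflect K b F : (K <= b)%nat -> fsum 0 K (fun i => F (b - i)%nat) = fsum (b - K) b F.
Proof.
  intros H. rewrite fsum_rev. simpl.
  transitivity (fsum 0 K (fun i => F (i + (b - K))%nat)). apply fsum_ext; intros; f_equal; lia.
  rewrite fsum_shift. f_equal; lia.
Qed.

Lemma fsum_tri N (F : nat -> nat -> R) :
  fsum 0 N (fun j => fsum 0 j (F j)) = fsum 0 N (fun l => fsum l N (fun j => F j l)).
Proof.
  induction N.
  - rewrite !fsum_one. reflexivity.
  - rewrite (fsum_last 0 N) by lia. rewrite (fsum_last 0 N (fun l => _)) by lia.
    rewrite IHN. rewrite (fsum_last 0 N (fun l => fsum l (S N) _)) by lia. rewrite fsum_one.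
    rewrite (fsum_ext 0 N (fun l => fsum l (S N) (fun j => F j l))
               (fun l => fsum l N (fun j => F j l) + F (S N) l)).
    rewrite fsum_plus. rewrite Rplus_assoc. reflexivity.
    intros. apply fsum_last. lia.
Qed.

Lemma binom_0 n : binom n 0 = 1%nat.
Proof. destruct n; reflexivity. Qed.

Lemma binom_gt n k : (n < k)%nat -> binom n k = 0%nat.
Proof.
  revert k; induction n; intros k H.
  - destruct k. lia. reflexivity.
  - destruct k. lia. simpl. rewrite !IHn by lia. reflexivity.
Qed.

Lemma binom_C n k : (k <= n)%nat -> INR (binom n k) = Binomial.C n k.
Proof.
  revert k; induction n; intros k H.
  - destruct k; [|lia]. unfold Binomial.C. simpl. field.
  - destruct k.
    + rewrite binom_0. unfold Binomial.C. rewrite Nat.sub_0_r. simpl (fact 0). simpl (INR 1). field. apply INR_fact_neq_0.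
    + simpl binom. rewrite plus_INR. destruct (Nat.eq_dec k n) as [->|Hne].
      * rewrite (binom_gt n (S n)) by lia. rewrite IHn by lia. unfold Binomial.C.
        rewrite !Nat.sub_diag. simpl (INR 0). simpl (fact 0). field. repeat split; try apply INR_fact_neq_0; simpl; lra.
      * rewrite !IHn by lia. apply pascal. lia.
Qed.

Lemma binom_nn n : binom n n = 1%nat.
Proof. apply INR_eq. rewrite binom_C by lia. unfold Binomial.C. rewrite Nat.sub_diag. simpl (fact 0).
  simpl (INR 1). field. apply INR_fact_neq_0. Qed.

Lemma binom_sym n k : (k <= n)%nat -> binom n (n - k) = binom n k.
Proof. intros H. apply INR_eq. rewrite !binom_C by lia. symmetry. apply pascal_step1. lia. Qed.

Lemma binom_prod J i e : (i + e <= J)%nat ->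
  INR (binom J i) * INR (binom (J - i) e) = INR (binom J e) * INR (binom (J - e) i).
Proof.
  intros H. rewrite !binom_C by lia. unfold Binomial.C.
  replace (J - i - e)%nat with (J - e - i)%nat by lia.
  field. repeat split; apply INR_fact_neq_0.
Qed.

Lemma fsum_sumf n f : fsum 0 n f = sum_f_R0 f n.
Proof. induction n. rewrite fsum_one; reflexivity. rewrite fsum_last by lia. rewrite IHn. reflexivity. Qed.

Lemma binom_expand x N : (x - 1) ^ N = fsum 0 N (fun d => INR (binom N d) * x ^ d * (-1) ^ (N - d)).
Proof.
  unfold Rminus. rewrite binomial. rewrite <- fsum_sumf. apply fsum_ext. intros.
  rewrite binom_C by lia. reflexivity.
Qed.

Lemma neg1_pow_sub a b : (b <= a)%nat -> (-1) ^ (a - b) = (-1) ^ a * (-1) ^ b.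
Proof.
  intros H. replace a with ((a - b) + b)%nat at 2 by lia. rewrite pow_add, Rmult_assoc.
  rewrite <- pow_add. replace (b + b)%nat with (2 * b)%nat by lia. rewrite pow_1_even. ring.
Qed.

Lemma alt_binom_sum k : (1 <= k)%nat -> fsum 0 k (fun r => (-1) ^ r * INR (binom k r)) = 0.
Proof.
  intros H. assert (E := binom_expand 1 k). replace (1 - 1) with 0 in E by ring.
  rewrite pow_i in E by lia.
  transitivity ((-1) ^ k * fsum 0 k (fun d => INR (binom k d) * 1 ^ d * (-1) ^ (k - d))).
  rewrite <- fsum_scal_l. apply fsum_ext. intros. rewrite pow1, neg1_pow_sub by lia.
  replace ((-1) ^ k * (INR (binom k i) * 1 * ((-1) ^ k * (-1) ^ i))) with (((-1) ^ k * (-1) ^ k) * ((-1) ^ i * INR (binom k i))) by ring. rewrite <- pow_add. replace (k + k)%nat with (2 * k)%nat by lia. rewrite pow_1_even. ring.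
  rewrite <- E. ring.
Qed.

Lemma bern_stab n j : (j <= n)%nat -> bern_tab n j = Bplus j.
Proof.
  induction n; intros H.
  - assert (j = 0%nat) by lia. subst. reflexivity.
  - destruct (Nat.eq_dec j (S n)) as [->|Hne]. reflexivity.
    cbn [bern_tab]. rewrite (proj2 (Nat.leb_le j n)) by lia. apply IHn. lia.
Qed.

Lemma Bplus0 : Bplus 0 = 1.
Proof. reflexivity. Qed.

Lemma binom_1 n : binom n 1 = n.
Proof. induction n. reflexivity. simpl. rewrite binom_0, IHn. reflexivity. Qed.

Lemma Bplus_S n : INR (S (S n)) * Bplus (S n) =
  - fsum 2 (S (S n)) (fun i => (-1) ^ (S i) * INR (binom (S (S n)) i) * Bplus (S (S n) - i)).
Proof.
  unfold Bplus at 1. cbn [bern_tab]. rewrite (proj2 (Nat.leb_gt (S n) n)) by lia.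
  rewrite Nat.eqb_refl. field_simplify. 2: apply not_0_INR; lia.
  f_equal. apply fsum_ext. intros. rewrite bern_stab by lia. reflexivity.
Qed.

Lemma bern_rec N : fsum 0 N (fun i => INR (binom (S N) i) * (-1) ^ (N - i) * Bplus i)
  = if (N =? 0)%nat then 1 else 0.
Proof.
  destruct N as [|n].
  - rewrite fsum_one, Bplus0. simpl. ring.
  - simpl (S n =? 0)%nat.
    set (g := fun i => (-1) ^ (S i) * INR (binom (S (S n)) i) * Bplus (S (S n) - i)).
    assert (H1 : fsum 1 (S (S n)) g = 0).
    { rewrite fsum_first by lia. unfold g at 1. rewrite binom_1.
      replace (S (S n) - 1)%nat with (S n) by lia.
      pose proof (Bplus_S n). fold g in H. simpl pow. lra. }
    rewrite <- H1.
    replace 1%nat with (S (S n) - S n)%nat at 1 by lia.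
    rewrite <- fsum_reflect by lia. apply fsum_ext. intros i Hi. unfold g.
    replace (S (S n) - (S (S n) - i))%nat with i by lia.
    rewrite binom_sym by lia.
    replace (S (S (S n) - i)) with ((S n - i) + 2)%nat by lia. rewrite pow_add. simpl (( -1) ^ 2). ring.
Qed.

Definition c (j l : nat) : R := / INR (S j) * INR (binom (S j) (j - l)) * Bplus (j - l).

Lemma coef_id j d : (d <= j)%nat ->
  fsum d j (fun l => c j l * INR (binom (S l) d) * (-1) ^ (S l - d)) = if (d =? j)%nat then -1 else 0.
Proof.
  intros Hd.
  replace d with (j - (j - d))%nat at 1 by lia.
  rewrite <- fsum_reflect by lia.
  transitivity (- (INR (binom (S j) d) / INR (S j)) *
     fsum 0 (j - d) (fun i => INR (binom (S (j - d)) i) * (-1) ^ ((j - d) - i) * Bplus i)).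
  - rewrite <- fsum_scal_l. apply fsum_ext. intros i Hi. unfold c.
    replace (j - (j - i))%nat with i by lia.
    replace (S (j - i)) with (S j - i)%nat by lia.
    replace (S j - i - d)%nat with (S ((j - d) - i)) by lia.
    simpl pow.
    assert (E := binom_prod (S j) i d ltac:(lia)).
    replace (S (j - d)) with (S j - d)%nat by lia.
    assert (INR (S j) <> 0) by (apply not_0_INR; lia).
    revert E. generalize (INR (binom (S j) i)) (INR (binom (S j - i) d)) (INR (binom (S j) d)) (INR (binom (S j - d) i)).
    intros a1 a2 a3 a4 E.
    match goal with |- ?L = ?Rr => apply Rminus_diag_uniq;
      replace (L - Rr) with ((a3 * a4 - a1 * a2) * (Bplus i * (-1) ^ (j - d - i) / INR (S j))) by (field; auto) end.
    rewrite E. ring.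
  - rewrite bern_rec. destruct (Nat.eq_dec d j) as [->|Hne].
    + rewrite Nat.sub_diag, Nat.eqb_refl. simpl (0 =? 0)%nat.
      assert (Hb : binom (S j) j = S j). { pose proof (binom_sym (S j) 1 ltac:(lia)) as Hs. rewrite binom_1 in Hs. replace (S j - 1)%nat with j in Hs by lia. exact Hs. } rewrite Hb.
      rewrite Nat.eqb_refl. field. apply not_0_INR; lia.
    + replace (j - d =? 0)%nat with false by (symmetry; apply Nat.eqb_neq; lia).
      replace (d =? j)%nat with false by (symmetry; apply Nat.eqb_neq; lia). ring.
Qed.

Definition P (j : nat) (x : R) : R := fsum 0 j (fun l => c j l * x ^ S l).

Lemma P_diff j x : P j x - P j (x - 1) = x ^ j.
Proof.
  unfold P. rewrite <- fsum_minus.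
  transitivity (- fsum 0 j (fun l => fsum 0 l (fun d => c j l * INR (binom (S l) d) * (-1) ^ (S l - d) * x ^ d))).
  - rewrite <- fsum_opp. apply fsum_ext. intros l Hl.
    rewrite binom_expand. rewrite fsum_last by lia. rewrite binom_nn, Nat.sub_diag.
    rewrite Rmult_plus_distr_l. rewrite <- fsum_scal_l. simpl (INR 1). simpl (pow (-1) 0).
    assert (fsum 0 l (fun i => c j l * (INR (binom (S l) i) * x ^ i * (-1) ^ (S l - i))) =
            fsum 0 l (fun d => c j l * INR (binom (S l) d) * (-1) ^ (S l - d) * x ^ d)) as ->.
    { apply fsum_ext; intros; ring. }
    ring.
  - rewrite fsum_tri.
    transitivity (- fsum 0 j (fun d => x ^ d * (if (d =? j)%nat then -1 else 0))).
    + f_equal. apply fsum_ext. intros d Hd. rewrite <- coef_id by lia. rewrite <- fsum_scal_l.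
      apply fsum_ext; intros; ring.
    + rewrite (fsum_single 0 j j) by (try lia; intros i Hi Hne;
        replace (i =? j)%nat with false by (symmetry; apply Nat.eqb_neq; lia); ring).
      rewrite Nat.eqb_refl. ring.
Qed.

Lemma P_0 j : P j 0 = 0.
Proof. unfold P. apply fsum_zero. intros. simpl. ring. Qed.

Lemma faulhaber j n : fsum 1 n (fun k => INR k ^ j) = P j (INR n).
Proof.
  induction n.
  - rewrite fsum_nil by lia. simpl. rewrite P_0. reflexivity.
  - rewrite fsum_last by lia. rewrite IHn. rewrite <- (P_diff j (INR (S n))).
    rewrite S_INR. replace (INR n + 1 - 1) with (INR n) by ring. ring.
Qed.

Lemma Hq_S n q : Hq (S n) q = Hq n q + powerRZ (INR (S n)) (- q).
Proof. unfold Hq. apply fsum_last. lia. Qed.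

Lemma Hq_0 q : Hq 0 q = 0.
Proof. unfold Hq. apply fsum_nil. lia. Qed.

Lemma abel j q n : fsum 1 n (fun k => INR k ^ j * Hq k q) =
  P j (INR n) * Hq n q - fsum 1 n (fun k => P j (INR k - 1) * powerRZ (INR k) (- q)).
Proof.
  induction n.
  - rewrite !fsum_nil by lia. rewrite Hq_0. ring.
  - rewrite !fsum_last by lia. rewrite IHn. rewrite Hq_S.
    pose proof (P_diff j (INR (S n))) as E. rewrite S_INR in E |- *.
    replace (INR n + 1 - 1) with (INR n) in * by ring.
    replace (P j (INR n + 1)) with (P j (INR n) + (INR n + 1) ^ j) by lra. ring.
Qed.

Lemma pw_shift k d q : (1 <= k)%nat ->
  INR k ^ d * powerRZ (INR k) (- q) = powerRZ (INR k) (- (q - Z.of_nat d)).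
Proof.
  intros H. rewrite pow_powerRZ. rewrite <- powerRZ_add. f_equal. lia.
  apply not_0_INR. lia.
Qed.

Lemma W_formula j q n : fsum 1 n (fun k => INR k ^ j * Hq k q) =
  fsum 0 j (fun l => c j l * INR n ^ S l) * Hq n q -
  fsum 0 j (fun l => c j l * fsum 0 (S l) (fun d => INR (binom (S l) d) * (-1) ^ (S l - d) * Hq n (q - Z.of_nat d))).
Proof.
  rewrite abel. unfold P at 1. f_equal.
  transitivity (fsum 1 n (fun k => fsum 0 j (fun l => c j l * fsum 0 (S l)
     (fun d => INR (binom (S l) d) * (-1) ^ (S l - d) * powerRZ (INR k) (- (q - Z.of_nat d)))))).
  - apply fsum_ext. intros k Hk. unfold P. rewrite <- fsum_scal_r. apply fsum_ext. intros l Hl.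
    rewrite binom_expand. rewrite Rmult_assoc. f_equal. rewrite <- fsum_scal_r. apply fsum_ext. intros d Hd.
    rewrite <- pw_shift by lia. ring.
  - rewrite fsum_swap. apply fsum_ext. intros l Hl. rewrite fsum_scal_l. f_equal.
    rewrite fsum_swap. apply fsum_ext. intros d Hd. rewrite fsum_scal_l. reflexivity.
Qed.

Ltac simpl_b := repeat match goal with
  | |- context [Nat.leb ?a ?b] => first [rewrite (proj2 (Nat.leb_le a b)) by lia | rewrite (proj2 (Nat.leb_gt a b)) by lia]
  | |- context [Nat.eqb ?a ?b] => first [rewrite (proj2 (Nat.eqb_eq a b)) by lia | rewrite (proj2 (Nat.eqb_neq a b)) by lia]
  end; simpl andb; cbv iota.

Definition bs (l d : nat) : R := INR (binom (S l) d) * (-1) ^ (S l - d).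

Definition Y (A : nat -> nat -> R) (m j l i : nat) : R :=
  if andb (m <=? i)%nat (i <=? m + S l)%nat then A m j * c j l * bs l (i - m) else 0.

Lemma a_step_pos r0 A m l : (m <= r0)%nat -> (1 <= l <= S r0 - m)%nat ->
  a_step (S r0) A m l = fsum (l - 1) (r0 - m) (fun j => A m j * c j (l - 1)).
Proof.
  intros H1 H2. unfold a_step. simpl_b.
  replace (S r0 - 1 - m)%nat with (r0 - m)%nat by lia.
  apply fsum_ext. intros j Hj. unfold c. replace (j - (l - 1))%nat with (S j - l)%nat by lia.
  unfold Rdiv. ring.
Qed.

Lemma part1 r0 A x h :
  fsum 0 r0 (fun m => fsum 0 (r0 - m) (fun j => A m j * fsum 0 j (fun l => c j l * x ^ S l) * h m))
  = fsum 0 (S r0) (fun m => fsum 1 (S r0 - m) (fun l => a_step (S r0) A m l * x ^ l * h m)).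
Proof.
  rewrite fsum_last by lia. rewrite Nat.sub_diag. rewrite (fsum_nil 1 0) by lia. rewrite Rplus_0_r.
  apply fsum_ext. intros m Hm.
  replace (S r0 - m)%nat with ((r0 - m) + 1)%nat by lia.
  change 1%nat with (0 + 1)%nat at 1. 
  rewrite <- (fsum_shift 0 (r0 - m) 1 (fun l => a_step (S r0) A m l * x ^ l * h m)).
  transitivity (fsum 0 (r0 - m) (fun j => fsum 0 j (fun l => A m j * c j l * x ^ S l * h m))).
  { apply fsum_ext. intros j Hj. rewrite <- fsum_scal_l, <- fsum_scal_r. apply fsum_ext; intros; ring. }
  rewrite fsum_tri. apply fsum_ext. intros l Hl.
  rewrite a_step_pos by lia. replace (l + 1 - 1)%nat with l by lia.
  rewrite <- !fsum_scal_r. apply fsum_ext. intros j Hj. replace (l + 1)%nat with (S l) by lia. ring.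
Qed.

Definition Q r0 A i := fsum 0 r0 (fun m => fsum 0 (r0 - m) (fun j => fsum 0 j (fun l => Y A m j l i))).

Lemma inner_shift r0 A h m j l : (m + S l <= S r0)%nat ->
  A m j * (c j l * fsum 0 (S l) (fun d => bs l d * h (m + d)%nat)) =
  fsum 0 (S r0) (fun i => h i * Y A m j l i).
Proof.
  intros H. rewrite (fsum_extend m (m + S l) 0 (S r0) (fun i => h i * Y A m j l i)); try lia.
  2: { intros i Hi Hout. unfold Y. destruct Hout; simpl_b; ring. }
  assert (E : fsum m (m + S l) (fun i => h i * Y A m j l i) = fsum 0 (S l) (fun d => h (d + m)%nat * Y A m j l (d + m)))
    by (pose proof (fsum_shift 0 (S l) m (fun i => h i * Y A m j l i)) as E'; cbv beta in E'; rewrite E'; f_equal; lia).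
  rewrite E. rewrite <- !fsum_scal_l. apply fsum_ext. intros d Hd.
  unfold Y. simpl_b. replace (d + m - m)%nat with d by lia. replace (m + d)%nat with (d + m)%nat by lia. ring.
Qed.

Lemma P2_rewrite r0 A h :
  fsum 0 r0 (fun m => fsum 0 (r0 - m) (fun j => A m j * fsum 0 j (fun l => c j l * fsum 0 (S l) (fun d => bs l d * h (m + d)%nat))))
  = fsum 0 (S r0) (fun i => h i * Q r0 A i).
Proof.
  transitivity (fsum 0 r0 (fun m => fsum 0 (r0 - m) (fun j => fsum 0 j (fun l => fsum 0 (S r0) (fun i => h i * Y A m j l i))))).
  { apply fsum_ext. intros m Hm. apply fsum_ext. intros j Hj. rewrite <- fsum_scal_l. apply fsum_ext. intros l Hl.
    apply inner_shift. lia. }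
  transitivity (fsum 0 r0 (fun m => fsum 0 (S r0) (fun i => fsum 0 (r0 - m) (fun j => fsum 0 j (fun l => h i * Y A m j l i))))).
  { apply fsum_ext. intros m Hm. rewrite <- fsum_swap. apply fsum_ext. intros j Hj. apply fsum_swap. }
  rewrite fsum_swap. apply fsum_ext. intros i Hi. unfold Q. rewrite <- fsum_scal_l. apply fsum_ext. intros m Hm.
  rewrite <- fsum_scal_l. apply fsum_ext. intros j Hj. rewrite <- fsum_scal_l. reflexivity.
Qed.

Lemma Q_low r0 A i : (i <= r0)%nat -> Q r0 A i = - a_step (S r0) A i 0.
Proof.
  intros Hi. unfold a_step. simpl_b. rewrite Ropp_involutive.
  replace (S r0 - 1)%nat with r0 by lia. unfold Q.
  rewrite (fsum_extend 0 i 0 r0 (fun m => fsum 0 (r0 - m) (fun j => fsum 0 j (fun l => Y A m j l i)))); try lia.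
  2: { intros m Hm Hout. destruct Hout as [Hout|Hout]; [lia|].
       apply fsum_zero. intros j Hj. apply fsum_zero. intros l Hl. unfold Y. simpl_b. reflexivity. }
  apply fsum_ext. intros y Hy. replace (S r0 - 1 - y)%nat with (r0 - y)%nat by lia.
  rewrite (fsum_extend (i - y - 1) (r0 - y) 0 (r0 - y) (fun j => fsum 0 j (fun l => Y A y j l i))); try lia.
  2: { intros j Hj Hout. destruct Hout as [Hout|Hout]; [|lia].
       apply fsum_zero. intros l Hl. unfold Y. simpl_b. reflexivity. }
  apply fsum_ext. intros j Hj. unfold D_coef.
  rewrite (fsum_extend (i - y - 1) j 0 j (fun l => Y A y j l i)); try lia.
  2: { intros l Hl Hout. destruct Hout as [Hout|Hout]; [|lia]. unfold Y. simpl_b. reflexivity. }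
  rewrite <- fsum_scal_l. apply fsum_ext. intros l Hl. unfold Y, bs, c. simpl_b.
  replace (S l - (i - y))%nat with (S l + y - i)%nat by lia. ring.
Qed.

Lemma Q_top r0 A : Q r0 A (S r0) = - a_step (S r0) A (S r0) 0.
Proof.
  unfold a_step. simpl_b. rewrite Ropp_involutive.
  replace (S r0 - 1)%nat with r0 by lia. unfold Q.
  apply fsum_ext. intros m Hm.
  rewrite (fsum_single 0 (r0 - m) (r0 - m)); try lia.
  2: { intros j Hj Hne. apply fsum_zero. intros l Hl. unfold Y. simpl_b. reflexivity. }
  rewrite (fsum_single 0 (r0 - m) (r0 - m)); try lia.
  2: { intros l Hl Hne. unfold Y. simpl_b. reflexivity. }
  unfold Y, bs, c. simpl_b. rewrite Nat.sub_diag, binom_0, Bplus0.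
  replace (S r0 - m)%nat with (S (r0 - m)) by lia. rewrite binom_nn, Nat.sub_diag.
  replace (S (r0 - m) - 1)%nat with (r0 - m)%nat by lia. simpl (INR 1). simpl pow.
  field. apply not_0_INR. lia.
Qed.

Lemma bookkeeping r0 A x h :
  fsum 0 r0 (fun m => fsum 0 (r0 - m) (fun j => A m j *
     (fsum 0 j (fun l => c j l * x ^ S l) * h m -
      fsum 0 j (fun l => c j l * fsum 0 (S l) (fun d => bs l d * h (m + d)%nat)))))
  = fsum 0 (S r0) (fun m => fsum 0 (S r0 - m) (fun l => a_step (S r0) A m l * x ^ l * h m)).
Proof.
  transitivity (fsum 0 r0 (fun m => fsum 0 (r0 - m) (fun j => A m j * fsum 0 j (fun l => c j l * x ^ S l) * h m))
    - fsum 0 r0 (fun m => fsum 0 (r0 - m) (fun j => A m j * fsum 0 j (fun l => c j l * fsum 0 (S l) (fun d => bs l d * h (m + d)%nat))))).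
  { rewrite <- fsum_minus. apply fsum_ext. intros m Hm. rewrite <- fsum_minus. apply fsum_ext. intros; ring. }
  rewrite part1, P2_rewrite.
  transitivity (fsum 0 (S r0) (fun m => a_step (S r0) A m 0 * x ^ 0 * h m + fsum 1 (S r0 - m) (fun l => a_step (S r0) A m l * x ^ l * h m))).
  2: { apply fsum_ext. intros m Hm. symmetry. apply fsum_first. lia. }
  rewrite fsum_plus. unfold Rminus. rewrite Rplus_comm. f_equal.
  rewrite <- fsum_opp. apply fsum_ext. intros i Hi.
  destruct (Nat.eq_dec i (S r0)) as [->|Hne].
  - rewrite Q_top. simpl pow. ring.
  - rewrite Q_low by lia. simpl pow. ring.
Qed.

Lemma hyper_id r0 p n : hyperH p (S r0) n =
  fsum 0 r0 (fun m => fsum 0 (r0 - m) (fun j => a_coef (S r0) m j * INR n ^ j * Hq n (p - Z.of_nat m))).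
Proof.
  revert n. induction r0; intros n.
  - rewrite !fsum_one. simpl. rewrite Z.sub_0_r. ring.
  - change (hyperH p (S (S r0)) n) with (fsum 1 n (fun j => hyperH p (S r0) j)).
    change (a_coef (S (S r0))) with (a_step (S r0) (a_coef (S r0))).
    rewrite <- (bookkeeping r0 (a_coef (S r0)) (INR n) (fun i => Hq n (p - Z.of_nat i))).
    erewrite (fsum_ext 1 n); [| intros k _; apply IHr0].
    rewrite fsum_swap. apply fsum_ext. intros m Hm. rewrite fsum_swap. apply fsum_ext. intros j Hj.
    transitivity (a_coef (S r0) m j * fsum 1 n (fun k => INR k ^ j * Hq k (p - Z.of_nat m))).
    { rewrite <- fsum_scal_l. apply fsum_ext. intros; ring. }
    rewrite W_formula. f_equal. f_equal. apply fsum_ext. intros l Hl. f_equal. apply fsum_ext. intros d Hd.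
    unfold bs. f_equal. f_equal. rewrite Nat2Z.inj_add. lia.
Qed.

Fixpoint pr (k : nat) (x : R) : R :=
  match k with O => x | S k' => pr k' x * (x + INR (S k')) end.

Lemma pr_pos k x : 0 < x -> 0 < pr k x.
Proof. intros H. induction k; cbn [pr]. exact H. apply Rmult_lt_0_compat. exact IHk.
  pose proof (pos_INR (S k)). lra. Qed.

Lemma pr_shift k x : pr k (x + 1) * x = pr (S k) x.
Proof.
  induction k.
  - simpl. ring.
  - change (pr (S k) (x + 1) * x = pr (S k) x * (x + INR (S (S k)))).
    cbn [pr]. cbn [pr] in IHk. rewrite <- IHk. rewrite !S_INR. ring.
Qed.

Definition Fk (k : nat) (x : R) : R := fsum 0 k (fun r => (-1) ^ r * INR (binom k r) / (x + INR r)).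

Lemma Fk_rec k x : 0 < x -> Fk (S k) x = Fk k x - Fk k (x + 1).
Proof.
  intros Hx. unfold Fk.
  transitivity (fsum 0 (S k) (fun r => (-1) ^ r * INR (binom k r) / (x + INR r)) +
                fsum 0 (S k) (fun r => (-1) ^ r * INR (match r with O => 0%nat | S r' => binom k r' end) / (x + INR r))).
  { rewrite <- fsum_plus. apply fsum_ext. intros r Hr. destruct r.
    - rewrite !binom_0. simpl. field. lra.
    - simpl binom at 1. rewrite plus_INR. field. pose proof (pos_INR (S r)). lra. }
  set (g := fun r => (-1) ^ r * INR (match r with O => 0%nat | S r' => binom k r' end) / (x + INR r)).
  rewrite (fsum_last 0 k (fun r => (-1) ^ r * INR (binom k r) / (x + INR r))) by lia.
  rewrite (binom_gt k (S k)) by lia.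
  rewrite (fsum_first 0 (S k) g) by lia.
  pose proof (fsum_shift 0 k 1 g) as E. replace (0 + 1)%nat with 1%nat in E by lia.
  replace (k + 1)%nat with (S k) in E by lia. rewrite <- E.
  unfold Rminus. rewrite <- fsum_opp.
  replace (fsum 0 k (fun i => g (i + 1)%nat)) with (fsum 0 k (fun i => - ((-1) ^ i * INR (binom k i) / (x + 1 + INR i)))).
  { unfold g. simpl (INR 0). unfold Rdiv. rewrite !Rmult_0_r, !Rmult_0_l. ring. }
  apply fsum_ext. intros i Hi. unfold g. replace (i + 1)%nat with (S i) by lia. rewrite S_INR. simpl pow.
  field. pose proof (pos_INR i). lra.
Qed.

Lemma Fk_closed k x : 0 < x -> Fk k x = INR (fact k) / pr k x.
Proof.
  revert x. induction k; intros x Hx.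
  - unfold Fk. rewrite fsum_one. simpl. field. lra.
  - rewrite Fk_rec by lra. rewrite !IHk by lra.
    assert (E1 := pr_shift k x). assert (E2 : pr (S k) x = pr k x * (x + INR (S k))) by reflexivity.
    pose proof (pr_pos k x Hx). pose proof (pr_pos k (x + 1) ltac:(lra)).
    pose proof (pos_INR k).
    assert (E3 : pr k (x + 1) = pr k x * (x + INR (S k)) / x) by (rewrite <- E2, <- E1; field; lra).
    rewrite E3, E2, fact_simpl, mult_INR, S_INR. field. repeat split; lra.
Qed.

Lemma pr_fact k n0 : pr k (INR (S n0)) * INR (fact n0) = INR (fact (S n0 + k)).
Proof.
  induction k.
  - rewrite Nat.add_0_r. simpl pr. rewrite fact_simpl, mult_INR. reflexivity.
  - cbn [pr]. replace (S n0 + S k)%nat with (S (S n0 + k)) by lia. rewrite fact_simpl, mult_INR.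
    rewrite <- IHk. rewrite (S_INR (S n0 + k)), plus_INR, !S_INR. ring.
Qed.

Lemma binom_pos n k : (k <= n)%nat -> 0 < INR (binom n k).
Proof. intros H. rewrite binom_C by lia. unfold Binomial.C. apply Rdiv_lt_0_compat. apply INR_fact_lt_0.
  apply Rmult_lt_0_compat; apply INR_fact_lt_0. Qed.

Lemma partial_frac n k : (1 <= n)%nat -> (1 <= k)%nat ->
  / INR (binom (n + k) k) = fsum 1 k (fun r => (-1) ^ (r + 1) * INR r * INR (binom k r) / INR (n + r)).
Proof.
  intros Hn Hk. destruct n as [|n0]. lia.
  set (x := INR (S n0)). assert (Hx : 0 < x) by (unfold x; apply lt_0_INR; lia).
  transitivity (x * Fk k x).
  - rewrite Fk_closed by lra. rewrite binom_C by lia. unfold Binomial.C.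
    replace (S n0 + k - k)%nat with (S n0) by lia. rewrite <- pr_fact.
    pose proof (pr_pos k x Hx). pose proof (INR_fact_lt_0 n0). pose proof (INR_fact_lt_0 k).
    unfold x. rewrite fact_simpl, mult_INR. fold x. field. repeat split; lra.
  - unfold Fk. rewrite <- fsum_scal_l.
    rewrite (fsum_first 0 k) by lia.
    transitivity (fsum 0 k (fun r => - ((-1) ^ r * INR (binom k r)) + x * ((-1) ^ r * INR (binom k r) / (x + INR r)))).
    + rewrite fsum_plus, fsum_opp, alt_binom_sum by lia. rewrite (fsum_first 0 k (fun r => x * _)) by lia. ring.
      transitivity (fsum 0 k (fun r => (-1) ^ (r + 1) * INR r * INR (binom k r) / INR (S n0 + r))).
      * apply fsum_ext. intros r Hr. rewrite plus_INR. fold x. rewrite pow_add.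
        pose proof (pos_INR r). field. lra.
      * rewrite fsum_first by lia. simpl (INR 0). unfold Rdiv. rewrite Rmult_0_r, !Rmult_0_l. ring.
Qed.

Definition Hh (n : nat) : R := Hq n 1.

Lemma Hq_nonneg n q : 0 <= Hq n q.
Proof. unfold Hq. rewrite <- (fsum_zero 1 n (fun _ => 0)) by auto. apply fsum_le. intros i Hi.
  apply powerRZ_le. apply lt_0_INR. lia. Qed.

Lemma powerRZ_le_pow x z l : 1 <= x -> (z <= Z.of_nat l)%Z -> powerRZ x z <= x ^ l.
Proof.
  intros Hx Hz. rewrite pow_powerRZ.
  replace (Z.of_nat l) with (z + Z.of_nat (Z.to_nat (Z.of_nat l - z)))%Z by lia.
  rewrite powerRZ_add by lra. rewrite <- pow_powerRZ.
  pose proof (powerRZ_lt x z ltac:(lra)). pose proof (pow_R1_Rle x (Z.to_nat (Z.of_nat l - z)) Hx).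
  nra.
Qed.

Lemma Hq_bound n q l : (1 - Z.of_nat l <= q)%Z -> Hq n q <= INR n ^ l * Hh n.
Proof.
  intros Hq'. unfold Hh, Hq. rewrite <- fsum_scal_l. apply fsum_le. intros j Hj.
  assert (Hj1 : 1 <= INR j) by (apply (le_INR 1); lia).
  replace (- q)%Z with (-1 + (1 - q))%Z by lia. rewrite powerRZ_add by lra.
  rewrite (Rmult_comm (INR n ^ l)). apply Rmult_le_compat_l. apply powerRZ_le; lra.
  apply Rle_trans with (INR j ^ l). apply powerRZ_le_pow; lia || lra.
  apply pow_incr. split. lra. apply le_INR. lia.
Qed.

Lemma Hh_S n : Hh (S n) = Hh n + / INR (S n).
Proof. unfold Hh. rewrite Hq_S. f_equal. simpl Z.opp. unfold powerRZ. simpl Pos.to_nat. rewrite pow_1. reflexivity. Qed.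

Lemma Hh_nonneg n : 0 <= Hh n.
Proof. apply Hq_nonneg. Qed.

Lemma T_bound q1 q2 u r n l1 l2 : (1 <= n)%nat -> (1 <= r)%nat -> (l1 + l2 + 1 <= u)%nat ->
  (1 - Z.of_nat l1 <= q1)%Z -> (1 - Z.of_nat l2 <= q2)%Z ->
  0 <= T_term q1 q2 u r n <= Hh n ^ 2 / (INR n * (INR n + 1)).
Proof.
  intros Hn Hr Hu H1 H2. unfold T_term.
  assert (Hx : 1 <= INR n) by (apply (le_INR 1); lia).
  assert (Hnr : INR n + 1 <= INR (n + r)) by (rewrite plus_INR; apply Rplus_le_compat_l; apply (le_INR 1); lia).
  pose proof (Hq_nonneg n q1). pose proof (Hq_nonneg n q2). pose proof (Hh_nonneg n).
  pose proof (Hq_bound n q1 l1 H1). pose proof (Hq_bound n q2 l2 H2).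
  assert (Hp1 : 0 < INR n ^ l1) by (apply pow_lt; lra).
  assert (Hp2 : 0 < INR n ^ l2) by (apply pow_lt; lra).
  set (e := (u - l1 - l2)%nat).
  assert (He : INR n ^ u = INR n ^ l1 * INR n ^ l2 * INR n ^ e).
  { rewrite <- !pow_add. f_equal. unfold e. lia. }
  assert (Hpe : INR n <= INR n ^ e).
  { replace e with (S (e - 1)) by (unfold e; lia). simpl. pose proof (pow_R1_Rle (INR n) (e - 1) Hx). nra. }
  split.
  - apply Rmult_le_pos. nra. apply Rlt_le, Rinv_0_lt_compat. rewrite He. repeat apply Rmult_lt_0_compat; lra.
  - rewrite He. unfold Rdiv.
    apply Rle_trans with (INR n ^ l1 * Hh n * (INR n ^ l2 * Hh n) * / (INR n ^ l1 * INR n ^ l2 * INR n ^ e * INR (n + r))).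
    + apply Rmult_le_compat_r. apply Rlt_le, Rinv_0_lt_compat. repeat apply Rmult_lt_0_compat; lra.
      apply Rmult_le_compat; assumption.
    + replace (INR n ^ l1 * Hh n * (INR n ^ l2 * Hh n) * / (INR n ^ l1 * INR n ^ l2 * INR n ^ e * INR (n + r)))
        with (Hh n ^ 2 * / (INR n ^ e * INR (n + r))) by (field; repeat split; lra).
      apply Rmult_le_compat_l. nra. apply Rinv_le_contravar. nra. apply Rmult_le_compat; lra.
Qed.

Definition gg (n : nat) : R := Hh (S n) ^ 2 / (INR (S n) * (INR (S n) + 1)).
Definition ff (n : nat) : R := (Hh n ^ 2 + 2 * Hh n + 3) / INR n.

Lemma key_ineq n : (1 <= n)%nat -> Hh n ^ 2 / (INR n * (INR n + 1)) <= ff n - ff (S n).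
Proof.
  intros Hn. unfold ff. rewrite Hh_S, S_INR.
  assert (Hx : 1 <= INR n) by (apply (le_INR 1); lia). pose proof (Hh_nonneg n) as HH0.
  set (h := Hh n) in *. set (x := INR n) in *. clearbody h x.
  assert (E : (h ^ 2 + 2 * h + 3) / x - ((h + / (x + 1)) ^ 2 + 2 * (h + / (x + 1)) + 3) / (x + 1)
              - h ^ 2 / (x * (x + 1))
              = (2 * h * / (x + 1) + 1 + / (x + 1) + / (x + 1) * / (x + 1)) / (x * (x + 1))).
  { field. split; lra. }
  assert (0 <= (2 * h * / (x + 1) + 1 + / (x + 1) + / (x + 1) * / (x + 1)) / (x * (x + 1))).
  { assert (0 < / (x + 1)) by (apply Rinv_0_lt_compat; lra).
    apply Rlt_le. apply Rdiv_lt_0_compat. nra. nra. }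
  lra.
Qed.

Lemma ff_nonneg n : (1 <= n)%nat -> 0 <= ff n.
Proof. intros Hn. unfold ff. pose proof (Hh_nonneg n). assert (1 <= INR n) by (apply (le_INR 1); lia).
  apply Rlt_le, Rdiv_lt_0_compat; nra. Qed.

Lemma gg_partial N : sum_f_R0 gg N <= ff 1 - ff (S (S N)).
Proof.
  induction N.
  - simpl sum_f_R0. unfold gg. apply key_ineq. lia.
  - simpl sum_f_R0. pose proof (key_ineq (S (S N)) ltac:(lia)). unfold gg at 2. lra.
Qed.

Lemma gg_nonneg n : 0 <= gg n.
Proof. unfold gg. pose proof (pos_INR (S n)). apply Rmult_le_pos. apply pow2_ge_0.
  apply Rlt_le, Rinv_0_lt_compat. assert (0 < INR (S n)) by (apply lt_0_INR; lia). nra. Qed.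

Lemma is_series_zero : is_series (fun _ : nat => 0) 0.
Proof.
  apply is_series_Reals. intros eps He. exists 0%nat. intros n Hn.
  assert (sum_f_R0 (fun _ => 0) n = 0) as ->. { induction n. reflexivity. simpl. rewrite IHn by lia. ring. }
  unfold Rdist. rewrite Rminus_0_r, Rabs_R0. lra.
Qed.

Lemma ex_series_gg : ex_series gg.
Proof.
  destruct (growing_cv (sum_f_R0 gg)) as [l Hl].
  - intros n. simpl. pose proof (gg_nonneg (S n)). lra.
  - exists (ff 1). intros y [i ->]. pose proof (gg_partial i). pose proof (ff_nonneg (S (S i)) ltac:(lia)). lra.
  - exists l. apply is_series_Reals. exact Hl.
Qed.

Lemma ex_series_T q1 q2 u r l1 l2 : (1 <= r)%nat -> (l1 + l2 + 1 <= u)%nat ->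
  (1 - Z.of_nat l1 <= q1)%Z -> (1 - Z.of_nat l2 <= q2)%Z ->
  ex_series (fun n => T_term q1 q2 u r (S n)).
Proof.
  intros Hr Hu H1 H2. apply (@ex_series_le R_AbsRing R_CompleteNormedModule _ gg). 2: apply ex_series_gg.
  intros n. destruct (T_bound q1 q2 u r (S n) l1 l2 ltac:(lia) Hr Hu H1 H2) as [Ha Hb].
  change (norm (T_term q1 q2 u r (S n))) with (Rabs (T_term q1 q2 u r (S n))).
  rewrite Rabs_pos_eq by exact Ha. exact Hb.
Qed.

Lemma is_series_scalR c a l : is_series a l -> is_series (fun n => c * a n) (c * l).
Proof. intros H. exact (is_series_scal c a l H). Qed.

Lemma is_series_fsum a b (F : nat -> nat -> R) (L : nat -> R) :
  (forall i, (a <= i <= b)%nat -> is_series (F i) (L i)) ->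
  is_series (fun n => fsum a b (fun i => F i n)) (fsum a b L).
Proof.
  induction b; intros HF.
  - destruct a.
    + rewrite fsum_one. apply (is_series_ext (F 0%nat)). intros n. rewrite fsum_one. reflexivity.
      apply HF. lia.
    + rewrite fsum_nil by lia. apply (is_series_ext (fun _ => 0)). intros n. rewrite fsum_nil by lia. reflexivity.
      apply is_series_zero.
  - destruct (Nat.le_gt_cases a b) as [Hab|Hab].
    + rewrite fsum_last by lia. apply (is_series_ext (fun n => fsum a b (fun i => F i n) + F (S b) n)).
      intros n. rewrite fsum_last by lia. reflexivity.
      apply (is_series_plus (fun n => fsum a b (fun i => F i n)) (F (S b))).
      apply IHb. intros; apply HF; lia. apply HF; lia.
    + destruct (Nat.eq_dec a (S b)) as [->|Hne].
      * rewrite fsum_one. apply (is_series_ext (F (S b))). intros n. rewrite fsum_one. reflexivity.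
        apply HF. lia.
      * rewrite fsum_nil by lia. apply (is_series_ext (fun _ => 0)). intros n. rewrite fsum_nil by lia. reflexivity.
        apply is_series_zero.
Qed.

Lemma term_identity r1 r2 p1 p2 m k n : (1 <= k)%nat -> (r1 + r2 <= m)%nat ->
  hyperH p1 (S r1) (S n) * hyperH p2 (S r2) (S n) / (INR (S n) ^ m * INR (binom (S n + k) k)) =
  fsum 0 r1 (fun l1 => fsum 0 (r1 - l1) (fun t1 => fsum 0 r2 (fun l2 => fsum 0 (r2 - l2) (fun t2 =>
    a_coef (S r1) l1 t1 * a_coef (S r2) l2 t2 *
    fsum 1 k (fun r => (-1) ^ (r + 1) * INR r * INR (binom k r) *
      T_term (p1 - Z.of_nat l1) (p2 - Z.of_nat l2) (m - t1 - t2) r (S n)))))).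
Proof.
  intros Hk Hm.
  set (x := INR (S n)). assert (Hx : 0 < x) by (unfold x; apply lt_0_INR; lia).
  assert (HB : 0 < INR (binom (S n + k) k)) by (apply binom_pos; lia).
  unfold Rdiv. rewrite !hyper_id. fold x.
  rewrite Rmult_assoc. rewrite <- fsum_scal_r. apply fsum_ext. intros l1 Hl1.
  rewrite <- fsum_scal_r. apply fsum_ext. intros t1 Ht1.
  rewrite <- fsum_scal_r. rewrite <- fsum_scal_l. apply fsum_ext. intros l2 Hl2.
  rewrite <- fsum_scal_r. rewrite <- fsum_scal_l. apply fsum_ext. intros t2 Ht2.
  set (H1 := Hq (S n) (p1 - Z.of_nat l1)). set (H2 := Hq (S n) (p2 - Z.of_nat l2)).
  set (u := (m - t1 - t2)%nat).
  assert (Hxm : x ^ m = x ^ t1 * x ^ t2 * x ^ u) by (rewrite <- !pow_add; f_equal; unfold u; lia).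
  assert (Hxu : 0 < x ^ u) by (apply pow_lt; lra).
  assert (Ht1p : 0 < x ^ t1) by (apply pow_lt; lra).
  assert (Ht2p : 0 < x ^ t2) by (apply pow_lt; lra).
  transitivity (a_coef (S r1) l1 t1 * a_coef (S r2) l2 t2 * (H1 * H2 / x ^ u) *
     fsum 1 k (fun r => (-1) ^ (r + 1) * INR r * INR (binom k r) / INR (S n + r))).
  - rewrite <- partial_frac by lia. rewrite Hxm. field. repeat split; lra.
  - rewrite Rmult_assoc. f_equal. rewrite <- fsum_scal_l. apply fsum_ext. intros r Hr.
    unfold T_term. fold x. fold H1 H2. fold u.
    assert (0 < INR (S n + r)) by (apply lt_0_INR; lia).
    field. repeat split; lra.
Qed.

Theorem theorem3 (s1 s2 p1 p2 m k : nat)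
  (hs1 : (1 <= s1)%nat) (hs2 : (1 <= s2)%nat)
  (hp1 : (1 <= p1)%nat) (hp2 : (1 <= p2)%nat)
  (hm : (1 <= m)%nat) (hk : (1 <= k)%nat)
  (hmge : (s1 + s2 - 1 <= m)%nat) :
  (forall l1 t1 l2 t2 r : nat,
     (l1 <= s1 - 1)%nat -> (t1 <= s1 - 1 - l1)%nat ->
     (l2 <= s2 - 1)%nat -> (t2 <= s2 - 1 - l2)%nat ->
     (1 <= r <= k)%nat ->
     ex_series (fun n => T_term (Z.of_nat p1 - Z.of_nat l1) (Z.of_nat p2 - Z.of_nat l2)
                                (m - t1 - t2) r (S n)))
  /\
  is_series
    (fun n => hyperH (Z.of_nat p1) s1 (S n) * hyperH (Z.of_nat p2) s2 (S n)
              / (INR (S n) ^ m * INR (binom (S n + k) k)))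
    (fsum 0 (s1 - 1) (fun l1 => fsum 0 (s1 - 1 - l1) (fun t1 =>
     fsum 0 (s2 - 1) (fun l2 => fsum 0 (s2 - 1 - l2) (fun t2 =>
       a_coef s1 l1 t1 * a_coef s2 l2 t2 *
       fsum 1 k (fun r =>
         (-1) ^ (r + 1) * INR r * INR (binom k r)
         * T (Z.of_nat p1 - Z.of_nat l1) (Z.of_nat p2 - Z.of_nat l2) (m - t1 - t2) r)))))).
Proof.
  assert (Hex : forall l1 t1 l2 t2 r : nat,
     (l1 <= s1 - 1)%nat -> (t1 <= s1 - 1 - l1)%nat ->
     (l2 <= s2 - 1)%nat -> (t2 <= s2 - 1 - l2)%nat ->
     (1 <= r <= k)%nat ->
     ex_series (fun n => T_term (Z.of_nat p1 - Z.of_nat l1) (Z.of_nat p2 - Z.of_nat l2)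
                                (m - t1 - t2) r (S n))).
  { intros l1 t1 l2 t2 r H1 H2 H3 H4 H5. apply (ex_series_T _ _ _ _ l1 l2); lia. }
  split. exact Hex.
  destruct s1 as [|r1]. lia. destruct s2 as [|r2]. lia.
  replace (S r1 - 1)%nat with r1 in * by lia. replace (S r2 - 1)%nat with r2 in * by lia.
  apply (is_series_ext (fun n => fsum 0 r1 (fun l1 => fsum 0 (r1 - l1) (fun t1 => fsum 0 r2 (fun l2 => fsum 0 (r2 - l2) (fun t2 =>
    a_coef (S r1) l1 t1 * a_coef (S r2) l2 t2 *
    fsum 1 k (fun r => (-1) ^ (r + 1) * INR r * INR (binom k r) *
      T_term (Z.of_nat p1 - Z.of_nat l1) (Z.of_nat p2 - Z.of_nat l2) (m - t1 - t2) r (S n)))))))).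
  { intros n. symmetry. apply term_identity; lia. }
  apply is_series_fsum. intros l1 Hl1.
  apply is_series_fsum. intros t1 Ht1.
  apply is_series_fsum. intros l2 Hl2.
  apply is_series_fsum. intros t2 Ht2.
  apply is_series_scalR.
  apply is_series_fsum. intros r Hr.
  apply is_series_scalR.
  apply Series_correct. apply Hex; lia.
Qed.
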